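(* Let $T$ be a finite tree, let $\mathcal{F}$ be a finite family of subtrees of $T$, and let $G$ be the disjointness graph of $\mathcal{F}$ (vertices are the members of $\mathcal{F}$, two adjacent iff they are vertex-disjoint); equivalently, $G$ is the complement of a chordal graph. Then $c(G)\le p(G)\le 2$.
   Context: A comparability graph is a graph admitting a transitive orientation. $p(G)$ is the minimum number $m$ such that $E(G)$ is the union of the edge sets of $m$ pairwise edge-disjoint comparability subgraphs of $G$; $c(G)$ is the minimum number of comparability subgraphs of $G$ (not necessarily edge-disjoint) whose edge sets cover $E(G)$. *)

(* Defs.v *)
From mathcomp Require Import all_boot.
Set Implicit Arguments. Unset Strict Implicit. Unset Printing Implicit Defensive.

Definition simple_graph (T : finType) (t : rel T) : Prop :=
  symmetric t /\ irreflexive t.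

Definition acyclic (T : finType) (t : rel T) : Prop :=
  forall s : seq T, uniq s -> 3 <= size s -> ~~ cycle t s.

Definition connected_graph (T : finType) (t : rel T) : Prop :=
  forall x y : T, connect t x y.

Definition is_tree (T : finType) (t : rel T) : Prop :=
  [/\ simple_graph t, 0 < #|T|, connected_graph t & acyclic t].

Definition induced (T : finType) (t : rel T) (S : {set T}) : rel T :=
  [rel a b | [&& a \in S, b \in S & t a b]].

(* a subtree of the tree t: a nonempty vertex set inducing a connected
   subgraph (which is then automatically a tree) *)
Definition is_subtree (T : finType) (t : rel T) (S : {set T}) : Prop :=
  S != set0 /\ {in S &, forall x y, connect (induced t S) x y}.

Definition disjointness_graph (T I : finType) (F : I -> {set T}) : rel I :=
  [rel i j | [disjoint F i & F j]].

Definition edge_set (V : finType) (E : rel V) : {set V * V} :=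
  [set e | E e.1 e.2].

Definition sym_set (V : finType) (H : {set V * V}) : bool :=
  [forall u, forall v, ((u, v) \in H) ==> ((v, u) \in H)].

Definition transitive_orientation (V : finType) (H O : {set V * V}) : bool :=
  [&& O \subset H,
      [forall u, forall v, ((u, v) \in H) ==>
          (((u, v) \in O) (+) ((v, u) \in O))] &
      [forall u, forall v, forall w,
          ((u, v) \in O) && ((v, w) \in O) ==> ((u, w) \in O)]].

Definition comparability_subgraph (V : finType) (E : rel V) (H : {set V * V}) : bool :=
  [&& H \subset edge_set E, sym_set H &
      [exists O : {set V * V}, transitive_orientation H O]].

Definition comp_partition (V : finType) (E : rel V) (m : nat) : bool :=
  [exists Hs : {ffun 'I_m -> {set V * V}},
    [&& [forall i, comparability_subgraph E (Hs i)],
        [forall i, forall j, (i != j) ==> [disjoint Hs i & Hs j]] &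
        edge_set E == \bigcup_i Hs i]].

Definition comp_cover (V : finType) (E : rel V) (m : nat) : bool :=
  [exists Hs : {ffun 'I_m -> {set V * V}},
    [forall i, comparability_subgraph E (Hs i)] &&
    (edge_set E == \bigcup_i Hs i)].

(* least m satisfying P among 0..N; the bound N = #|V|*#|V| is always
   large enough (one subgraph per edge), so this is the true minimum. *)
Definition least_upto (P : pred nat) (N : nat) : nat := find P (iota 0 N.+1).

Definition p_num (V : finType) (E : rel V) : nat :=
  least_upto (comp_partition E) (#|V| * #|V|).

Definition c_num (V : finType) (E : rel V) : nat :=
  least_upto (comp_cover E) (#|V| * #|V|).

(* Main.v *)
Require Import Defs.
From mathcomp Require Import all_boot zify.
Set Implicit Arguments. Unset Strict Implicit. Unset Printing Implicit Defensive.

Section Tree.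
Variables (T : finType) (t : rel T).
Hypothesis tsym : symmetric t.
Hypothesis tirr : irreflexive t.
Hypothesis tacy : acyclic t.

Lemma nb_sep x y z s : t x y -> t x z -> y != z -> path t y s -> last y s = z ->
  x \notin y :: s -> False.
Proof.
move=> txy txz yz ps ls xs.
move: ls; case/shortenP: ps => s' ps' us' sub ls.
have xs' : x \notin y :: s'.
  rewrite inE negb_or; move: xs; rewrite inE negb_or => /andP[-> xs] /=.
  by apply/negP => /sub; apply/negP.
have u3 : uniq (x :: y :: s') by rewrite cons_uniq xs' us'.
case: s' ps' us' sub ls xs' u3 => [|w s'] ps' us' sub ls xs' u3.
  by move: yz; rewrite /= -ls eqxx.
have sz : 3 <= size [:: x, y, w & s'] by [].
move: (tacy u3 sz); apply/negP; apply/negPn.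
rewrite /= txy.
move: ps' => /= /andP[-> ps'].
rewrite rcons_path ps' /=.
move: ls => /= ->. by rewrite tsym.
Qed.

Lemma path_unique x p q : path t x p -> path t x q -> last x p = last x q ->
  uniq (x :: p) -> uniq (x :: q) -> p = q.
Proof.
elim: p x q => [|y p IH] x [|z q] //=.
- move=> _ _ lq _ /andP[xq _]; exfalso; move: xq.
  by rewrite lq mem_last.
- move=> _ _ lp /andP[xp _]; exfalso; move: xp.
  by rewrite -lp mem_last.
move=> /andP[txy py] /andP[txz qz] lpq /andP[xp up] /andP[xq uq].
case: (eqVneq y z) => [eyz|yz].
  by subst z; rewrite (IH y q py qz lpq up uq).
exfalso.
apply: (nb_sep txy txz yz (s := p ++ rev (belast z q))).
- rewrite cat_path py /= lpq rev_path.
  rewrite (@eq_path _ _ t) // => a b /=; exact: tsym.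
- rewrite last_cat lpq.
  case: q {qz uq xq lpq} => [|w q] //=.
  by rewrite rev_cons last_rcons.
- rewrite -cat_cons mem_cat negb_or xp /= mem_rev.
  apply/negP => /mem_belast; apply/negP; exact: xq.
Qed.

Hypothesis tconn : connected_graph t.
Variable r : T.

Lemma ex_rp v : exists p, [&& path t r p, last r p == v & uniq (r :: p)].
Proof.
case/connectP: (tconn r v) => p pp ->.
case/shortenP: pp => p' pp' up' _.
by exists p'; rewrite pp' eqxx up'.
Qed.

Definition pv v := xchoose (ex_rp v).
Definition P v := r :: pv v.

Lemma pv_path v : path t r (pv v).
Proof. by case/and3P: (xchooseP (ex_rp v)). Qed.
Lemma pv_last v : last r (pv v) = v.
Proof. by case/and3P: (xchooseP (ex_rp v)) => _ /eqP. Qed.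
Lemma pv_uniq v : uniq (r :: pv v).
Proof. by case/and3P: (xchooseP (ex_rp v)). Qed.

Lemma pv_unique v p : path t r p -> last r p = v -> uniq (r :: p) -> pv v = p.
Proof.
move=> pp lp up; apply: (@path_unique r) => //.
- exact: pv_path.
- by rewrite pv_last lp.
- exact: pv_uniq.
Qed.

Lemma pv_r : pv r = [::].
Proof. exact: pv_unique. Qed.

Lemma P_inj a b : P a = P b -> a = b.
Proof. by case => E; rewrite -(pv_last a) -(pv_last b) E. Qed.

Lemma mem_P v : v \in P v.
Proof. by rewrite /P -{1}(pv_last v) mem_last. Qed.

Lemma anc_prefix a v : a \in P v -> exists s, P v = P a ++ s.
Proof.
rewrite /P inE; case/orP => [/eqP ->|ain].
  by rewrite pv_r; exists (pv v).
have [p1 [p2 E]] : exists p1 p2, pv v = p1 ++ a :: p2.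
  by case/splitPr: ain => p1 p2; exists p1, p2.
have Epv : pv v = rcons p1 a ++ p2 by rewrite E -cats1 -catA.
have pp := pv_path v; have pu := pv_uniq v.
rewrite Epv cat_path in pp; case/andP: pp => pp _.
rewrite Epv -cat_cons cat_uniq in pu; case/and3P: pu => pu _ _.
exists p2; rewrite Epv (@pv_unique a (rcons p1 a)) //.
by rewrite last_rcons.
Qed.

Lemma edge_P u w : t u w -> P w = rcons (P u) w \/ P u = rcons (P w) u.
Proof.
move=> tuw; case: (boolP (w \in P u)) => wu.
  right; have [s Es] := anc_prefix wu.
  have Epv : pv u = pv w ++ s by case: Es.
  have pp := pv_path u; have pu := pv_uniq u; have pl := pv_last u.
  rewrite Epv cat_path pv_last in pp; case/andP: pp => _ pp.
  rewrite Epv -cat_cons cat_uniq in pu; case/and3P: pu => _ hs us.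
  rewrite Epv last_cat pv_last in pl.
  have ws : w \notin s.
    apply/negP => ws; move: hs; apply/negP/negPn; apply/hasP; exists w => //.
    exact: mem_P.
  have wneu : w != u by apply/eqP => E; move: tuw; rewrite E tirr.
  suff Es1 : s = [:: u] by rewrite Es Es1 cats1.
    apply: (@path_unique w) => //=.
    - by rewrite tsym tuw.
    - by rewrite ws.
    - by rewrite inE wneu.
left; rewrite /P (@pv_unique w (rcons (pv u) w)) //.
- by rewrite rcons_path pv_path pv_last.
- by rewrite last_rcons.
- by rewrite -rcons_cons rcons_uniq wu pv_uniq.
Qed.

Lemma induced_in (A : {set T}) u q : path (induced t A) u q -> {subset q <= A}.
Proof.
elim: q u => [|w q IH] u //= /andP[/and3P[_ wA _] pq] x.
by rewrite inE => /orP[/eqP->|/(IH _ pq)].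
Qed.

Lemma induced_sub (A : {set T}) u q : path (induced t A) u q -> path t u q.
Proof. by apply: sub_path => a b /and3P[]. Qed.

Lemma top_ex (A : {set T}) : is_subtree t A ->
  exists2 a, a \in A & forall v, v \in A -> a \in P v.
Proof.
case=> ne conn; case/set0Pn: ne => x0 x0A.
case: (arg_minnP (fun x => size (P x)) x0A) => a aA amin.
exists a => // v vA.
case/connectP: (conn a v aA vA) => q pq ->.
have gen : forall q u, u \in A -> a \in P u -> path (induced t A) u q ->
    a \in P (last u q).
  elim => [|w q1 IH] u uA au //= /andP[/and3P[_ wA tuw] pq1].
  apply: (IH w wA _ pq1).
  case: (edge_P tuw) => [->|Eu]; first by rewrite mem_rcons inE au orbT.
  move: au; rewrite Eu mem_rcons inE => /orP[/eqP Eau|//].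
  by exfalso; have := amin w wA; rewrite Eau Eu size_rcons ltnn.
exact: gen q a aA (mem_P a) pq.
Qed.

Lemma convex (A : {set T}) a b x : is_subtree t A -> a \in A -> x \in A ->
  a \in P b -> b \in P x -> b \in A.
Proof.
case=> _ conn aA xA ab bx.
case: (eqVneq b a) => [->//|ba].
have [s1 E1] := anc_prefix ab; have [s2 E2] := anc_prefix bx.
have Eb : pv b = pv a ++ s1 by case: E1.
have Ex : pv x = pv a ++ (s1 ++ s2) by case: E2; rewrite Eb catA.
have lb : last a s1 = b by rewrite -(pv_last a) -last_cat -Eb pv_last.
have bs1 : b \in s1.
  by move: (mem_last a s1); rewrite lb inE (negbTE ba).
have pp := pv_path x; have pu := pv_uniq x; have pl := pv_last x.
rewrite Ex cat_path pv_last in pp; case/andP: pp => _ pp.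
rewrite Ex -cat_cons cat_uniq in pu; case/and3P: pu => _ hs us.
rewrite Ex last_cat pv_last in pl.
have as12 : a \notin s1 ++ s2.
  apply/negP => ws; move: hs; apply/negP/negPn; apply/hasP; exists a => //.
  exact: mem_P.
case: (boolP (b \in A)) => // bA.
case/connectP: (conn a x aA xA) => q pq lq.
case/shortenP: pq lq => q' pq' uq' _ lq'.
have E : q' = s1 ++ s2.
  apply: (@path_unique a) => //.
  - exact: induced_sub pq'.
  - by rewrite pl.
  - by rewrite cons_uniq as12.
have := induced_in pq'; rewrite E => sub.
by move: (sub b); rewrite mem_cat bs1 (negbTE bA) => /(_ isT).
Qed.

Lemma prefix_total (s1 t1 s2 t2 : seq T) : s1 ++ t1 = s2 ++ t2 ->
  (exists u, s2 = s1 ++ u) \/ (exists u, s1 = s2 ++ u).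
Proof.
elim: s1 s2 => [|x s1 IH] [|y s2] /=.
- by left; exists [::].
- by left; exists (y :: s2).
- by right; exists (x :: s1).
case=> -> /IH [[u ->]|[u ->]]; [left|right]; by exists u.
Qed.

Lemma anc_total a b x : a \in P x -> b \in P x -> a \in P b \/ b \in P a.
Proof.
move=> /anc_prefix [s1 E1] /anc_prefix [s2 E2].
case: (@prefix_total (P a) s1 (P b) s2); first by rewrite -E1 -E2.
- by case=> u ->; left; rewrite mem_cat mem_P.
- by case=> u ->; right; rewrite mem_cat mem_P.
Qed.

Lemma anc_trans a b c : a \in P b -> b \in P c -> a \in P c.
Proof.
move=> ab /anc_prefix [s ->]; by rewrite mem_cat ab.
Qed.

Lemma anc_anti a b : a \in P b -> b \in P a -> a = b.
Proof.
move=> /anc_prefix [s1 E1] /anc_prefix [s2 E2].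
have H : size (P a) = size (P a) + size s1 + size s2.
  by rewrite {1}E2 E1 !size_cat.
have /size0nil s10 : size s1 = 0 by lia.
by apply: P_inj; rewrite E1 s10 cats0.
Qed.

End Tree.

Fixpoint lexlt (s1 s2 : seq nat) : bool :=
  match s1, s2 with
  | x :: s1', y :: s2' => (x < y) || ((x == y) && lexlt s1' s2')
  | _, _ => false
  end.

Lemma lexlt_irr s : lexlt s s = false.
Proof. by elim: s => //= x s ->; rewrite ltnn eqxx. Qed.

Lemma lexlt_trans s1 s2 s3 : lexlt s1 s2 -> lexlt s2 s3 -> lexlt s1 s3.
Proof.
elim: s1 s2 s3 => [|x s1 IH] [|y s2] [|z s3] //=.
case/orP=> [xy|/andP[/eqP-> l1]]; case/orP=> [yz|/andP[/eqP<- l2]].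
- by rewrite (ltn_trans xy yz).
- by rewrite xy.
- by rewrite yz.
- by rewrite eqxx (IH _ _ l1 l2) orbT.
Qed.

Lemma lexlt_asym s1 s2 : lexlt s1 s2 -> lexlt s2 s1 -> False.
Proof. by move=> a b; move: (lexlt_trans a b); rewrite lexlt_irr. Qed.

Lemma lexlt_catl s w : lexlt s (s ++ w) = false.
Proof. by elim: s => //= x s ->; rewrite ltnn eqxx. Qed.

Lemma lexlt_catr s w : lexlt (s ++ w) s = false.
Proof. by elim: s => [|x s IH] /=; [case: w|rewrite IH ltnn eqxx]. Qed.

Lemma lexlt_total s1 s2 : ~~ lexlt s1 s2 -> ~~ lexlt s2 s1 ->
  (exists w, s2 = s1 ++ w) \/ (exists w, s1 = s2 ++ w).
Proof.
elim: s1 s2 => [|x s1 IH] [|y s2] /=.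
- by left; exists [::].
- by left; exists (y :: s2).
- by right; exists (x :: s1).
rewrite !negb_or => /andP[xy a] /andP[yx b].
have exy : x = y by move: xy yx; rewrite -!leqNgt; lia.
subst y; move: a b; rewrite eqxx /= => a b.
by case: (IH s2 a b) => [[w ->]|[w ->]]; [left|right]; exists w.
Qed.

Lemma map_prefix (A : eqType) (f : A -> nat) (finj : injective f) (s1 s2 : seq A) w :
  map f s2 = map f s1 ++ w -> exists w', s2 = s1 ++ w'.
Proof.
move=> E; exists (drop (size s1) s2).
have E1 : take (size s1) s2 = s1.
  apply: (inj_map finj); rewrite map_take E take_size_cat //.
  by rewrite size_map.
by rewrite -{1}(cat_take_drop (size s1) s2) E1.
Qed.

Lemma disjP (T : finType) (A B : {set T}) :
  reflect (forall x, x \in A -> x \in B -> False) [disjoint A & B].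
Proof.
apply: (iffP pred0P) => H.
  by move=> x xA xB; have := H x; rewrite /= xA xB.
by move=> x /=; apply/negP => /andP[]; apply: H.
Qed.

Lemma find_mono (P1 P2 : pred nat) s : (forall x, P2 x -> P1 x) -> find P1 s <= find P2 s.
Proof.
move=> H; elim: s => //= x s IH.
case: (boolP (P1 x)) => h1 //=.
have h2 : P2 x = false by apply/negP => /H; apply/negP.
by rewrite h2 ltnS.
Qed.

Lemma find_iota_le (P0 : pred nat) k m n : P0 (m + k) -> find P0 (iota m n) <= k.
Proof.
elim: n m k => [|n IH] m k //= Pk.
case: (boolP (P0 m)) => //= hm.
case: k Pk => [|k] Pk; first by rewrite addn0 in Pk; rewrite Pk in hm.
by rewrite ltnS; apply: IH; rewrite addSnnS.
Qed.

Lemma part_cover (V : finType) (E : rel V) m : comp_partition E m -> comp_cover E m.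
Proof.
by case/existsP => Hs /and3P[a _ c]; apply/existsP; exists Hs; rewrite a c.
Qed.

Section Main.
Variables (T : finType) (t : rel T).
Hypotheses (tsym : symmetric t) (tirr : irreflexive t) (tacy : acyclic t)
  (tconn : connected_graph t).
Variable r : T.
Variables (I : finType) (F : I -> {set T}).
Hypothesis HF : forall i, is_subtree t (F i).
Local Notation Q := (P tconn r).
Variable tp : I -> T.
Hypothesis tpF : forall i, tp i \in F i.
Hypothesis tpA : forall i v, v \in F i -> tp i \in Q v.

Definition key i := locked (map (fun x => nat_of_ord (enum_rank x)) (Q (tp i))).

Lemma key_inj : injective (fun x : T => nat_of_ord (enum_rank x)).
Proof. by move=> x y /ord_inj /enum_rank_inj. Qed.

Lemma comp_nolex u v : tp u \in Q (tp v) ->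
  lexlt (key u) (key v) = false /\ lexlt (key v) (key u) = false.
Proof.
case/(anc_prefix tsym tacy) => s E.
by rewrite /key; unlock; rewrite E map_cat lexlt_catl lexlt_catr.
Qed.

Lemma nolex_comp u v : ~~ lexlt (key u) (key v) -> ~~ lexlt (key v) (key u) ->
  tp u \in Q (tp v) \/ tp v \in Q (tp u).
Proof.
move=> a b; case: (lexlt_total a b) => [[w E]|[w E]]; move: E; rewrite /key; unlock => E.
  by left; have [w' ->] := map_prefix key_inj E; rewrite mem_cat mem_P.
by right; have [w' ->] := map_prefix key_inj E; rewrite mem_cat mem_P.
Qed.

Lemma noncomp_disj u v : ~~ (tp u \in Q (tp v)) -> ~~ (tp v \in Q (tp u)) ->
  [disjoint F u & F v].
Proof.
move=> h1 h2; apply/disjP => x xu xv.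
case: (anc_total tsym tacy (tpA xu) (tpA xv)) => h.
  by rewrite h in h1.
by rewrite h in h2.
Qed.

Lemma lex_disj u v : lexlt (key u) (key v) -> [disjoint F u & F v].
Proof.
move=> l; apply: noncomp_disj; apply/negP => h.
  by have [a _] := comp_nolex h; rewrite a in l.
by have [_ a] := comp_nolex h; rewrite a in l.
Qed.

Lemma disj_anti u v : [disjoint F u & F v] -> tp u \in Q (tp v) ->
  tp v \in Q (tp u) -> False.
Proof.
move=> d a b; have E := anc_anti tsym tacy a b.
by move/disjP: d; apply; [apply: tpF | rewrite E; apply: tpF].
Qed.

Lemma O1_trans u v w : [disjoint F u & F v] -> [disjoint F v & F w] ->
  tp u \in Q (tp v) -> tp v \in Q (tp w) -> [disjoint F u & F w].
Proof.
move=> d1 d2 a1 a2; apply/disjP => x xu xw.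
have cx := tpA xw.
have bx := anc_trans tsym tacy a2 cx.
have bF := convex tsym tacy (HF u) (tpF u) xu a1 bx.
by move/disjP: d1; apply; [apply: bF | apply: tpF].
Qed.

Lemma part2 : comp_partition (disjointness_graph F) 2.
Proof.
pose E := disjointness_graph F.
pose H1 := [set e : I * I | [disjoint F e.1 & F e.2] &&
                ((tp e.1 \in Q (tp e.2)) || (tp e.2 \in Q (tp e.1)))].
pose O1 := [set e : I * I | [disjoint F e.1 & F e.2] && (tp e.1 \in Q (tp e.2))].
pose H2 := [set e : I * I | lexlt (key e.1) (key e.2) || lexlt (key e.2) (key e.1)].
pose O2 := [set e : I * I | lexlt (key e.1) (key e.2)].
have c1 : comparability_subgraph E H1.
  apply/and3P; split.
  - by apply/subsetP => -[u v]; rewrite !inE /= => /andP[d _].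
  - apply/forallP => u; apply/forallP => v; apply/implyP.
    by rewrite !inE /= disjoint_sym orbC.
  - apply/existsP; exists O1; apply/and3P; split.
    + by apply/subsetP => -[u v]; rewrite !inE /= => /andP[-> ->].
    + apply/forallP => u; apply/forallP => v; apply/implyP.
      rewrite !inE /= => /andP[d h]; rewrite d disjoint_sym d /=.
      case/orP: h => h; rewrite h /= ?addbT.
        by apply/negP => h'; apply: (disj_anti d h h').
      by apply/negP => h'; apply: (disj_anti d h' h).
    + apply/forallP => u; apply/forallP => v; apply/forallP => w; apply/implyP.
      rewrite !inE /= => /andP[/andP[d1 a1] /andP[d2 a2]].
      rewrite (O1_trans d1 d2 a1 a2) /=. exact: (anc_trans tsym tacy a1 a2).
have c2 : comparability_subgraph E H2.
  apply/and3P; split.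
  - apply/subsetP => -[u v]; rewrite !inE /= => /orP[l|l]; first exact: lex_disj.
    by have := lex_disj l; rewrite disjoint_sym.
  - apply/forallP => u; apply/forallP => v; apply/implyP.
    by rewrite !inE /= orbC.
  - apply/existsP; exists O2; apply/and3P; split.
    + by apply/subsetP => -[u v]; rewrite !inE /= => ->.
    + apply/forallP => u; apply/forallP => v; apply/implyP.
      rewrite !inE; case/orP => h; rewrite h ?addbT.
        by apply/negP => h'; apply: (lexlt_asym h h').
      by apply/negP => h'; apply: (lexlt_asym h h').
    + apply/forallP => u; apply/forallP => v; apply/forallP => w; apply/implyP.
      rewrite !inE /= => /andP[a1 a2]. exact: lexlt_trans a1 a2.
have d12 : [disjoint H1 & H2].
  apply/disjP => -[u v]; rewrite !inE /= => /andP[_ h] l.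
  case/orP: h => h; have [a b] := comp_nolex h.
    by move: l; rewrite a b.
  by move: l; rewrite a b.
apply/existsP; exists [ffun k : 'I_2 => if k == ord0 then H1 else H2].
apply/and3P; split.
- by apply/forallP => k; rewrite ffunE; case: ifP => _.
- apply/forallP => -[[|[|//]] i2]; apply/forallP => -[[|[|//]] j2];
    rewrite !ffunE //=; by rewrite disjoint_sym.
- apply/eqP/setP => -[u v]; rewrite inE /=; apply/idP/bigcupP.
  + move=> d.
    case: (boolP ((tp u \in Q (tp v)) || (tp v \in Q (tp u)))) => h.
      by exists ord0 => //; rewrite ffunE eqxx inE; apply/andP; split; [exact d | exact h].
    exists (@Ordinal 2 1 isT) => //; rewrite ffunE /= inE /=.
    move: h; rewrite negb_or => /andP[h1 h2].
    apply/negPn/negP; rewrite negb_or => /andP [n1 n2].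
    by case: (nolex_comp n1 n2) => h; [rewrite h in h1 | rewrite h in h2].
  + case=> k _; rewrite ffunE; case: ifP => _; rewrite inE /=.
      by case/andP.
    case/orP => l; first exact: lex_disj.
    by have := lex_disj l; rewrite disjoint_sym.
Qed.

End Main.

Theorem theorem6 (T : finType) (t : rel T) (I : finType) (F : I -> {set T}) :
  is_tree t ->
  (forall i, is_subtree t (F i)) ->
  c_num (disjointness_graph F) <= p_num (disjointness_graph F) <= 2.
Proof.
move=> [[tsym tirr] T0 tconn tacy] HF.
case/card_gt0P: T0 => r _.
have [tp tpF tpA] := @fin_all_exists2 I (fun _ => T) (fun i a => a \in F i)
   (fun i a => forall v, v \in F i -> a \in P tconn r v)
   (fun i => top_ex tsym tirr tacy tconn r (HF i)).
have part := part2 tsym tacy HF tpF tpA.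
apply/andP; split.
- rewrite /c_num /p_num /least_upto; apply: find_mono => m; exact: part_cover.
- rewrite /p_num /least_upto; exact: (@find_iota_le _ 2 0).
Qed.
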